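(* Let $G$ be a non-cyclic group containing elements of order $n$. Suppose that $\mathcal{M}(G)$ is $n$-locally simply connected and that $G$ admits an $n$-regular 2-transitive cover. Then $|\mathcal{M}(G)|$, and hence $|\mathcal{C}(G)|$, is simply connected.
   Context: For a group $G$, $\mathcal{C}(G)$ is the poset of left cosets of proper subgroups of $G$ (including the trivial subgroup) ordered by inclusion, and $|\mathcal{C}(G)|$ the realization of its order complex. $\mathcal{M}(G)$ is the simplicial complex with vertex set $G$ whose simplices are the finite nonempty subsets of $G$ contained in some proper left coset; $|\mathcal{M}(G)|\simeq|\mathcal{C}(G)|$. For non-cyclic $G$, every $\{1,g\}$ is an edge; the standard presentation of $\pi_1(\mathcal{M}(G))$ has a generator $(u,v)$ for each ordered pair with $\{u,v\}$ an edge, and relations $(u,v)=1$ if $1\in\{u,v\}$, $(u,v)(v,u)=1$ for every edge, and $(u,v)(v,w)(w,u)=1$ for every 2-simplex $\{u,v,w\}$. $\mathcal{M}(G)$ is $n$-locally simply connected if every generator $(g,h)$ of this presentation with $g$ of order $n$ is trivial in $\pi_1(\mathcal{M}(G))$. A set $S$ of proper nontrivial subgroups of $G$ is a cover if every element of $G$ lies in some $H\in S$; it is 2-transitive if for each $H\in S$ the action of $G$ on the left cosets $G/H$ is 2-transitive; it is $n$-regular if for each $H\in S$ there is $g\in G$ of order $n$ acting nontrivially on $G/H$. *)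

(* Defs.v *)
From Stdlib Require Import List ZArith Relations.
Import ListNotations.

Record group := Group {
  carrier :> Type;
  gmul : carrier -> carrier -> carrier;
  ginv : carrier -> carrier;
  gone : carrier;
  gmulA : forall x y z, gmul x (gmul y z) = gmul (gmul x y) z;
  gmul1l : forall x, gmul gone x = x;
  gmul1r : forall x, gmul x gone = x;
  gmulVl : forall x, gmul (ginv x) x = gone;
  gmulVr : forall x, gmul x (ginv x) = gone
}.

Arguments gmul {g}.
Arguments ginv {g}.
Arguments gone {g}.

Section Defs.
Variable G : group.

Fixpoint gpow (g : G) (k : nat) : G :=
  match k with O => gone | S k => gmul g (gpow g k) end.

Definition gzpow (g : G) (k : Z) : G :=
  match k with
  | Z0 => gone
  | Zpos p => gpow g (Pos.to_nat p)
  | Zneg p => ginv (gpow g (Pos.to_nat p))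
  end.

Definition cyclic : Prop := exists g : G, forall x : G, exists k : Z, x = gzpow g k.

Definition has_order (g : G) (n : nat) : Prop :=
  0 < n /\ gpow g n = gone /\ forall m, 0 < m < n -> gpow g m <> gone.

Definition subgroup (H : G -> Prop) : Prop :=
  H gone /\ (forall x y, H x -> H y -> H (gmul x y)) /\ (forall x, H x -> H (ginv x)).

Definition proper (H : G -> Prop) : Prop := exists g, ~ H g.
Definition nontrivial (H : G -> Prop) : Prop := exists h, H h /\ h <> gone.

Definition in_lcoset (x : G) (H : G -> Prop) (y : G) : Prop := H (gmul (ginv x) y).

Definition Medge (u v : G) : Prop :=
  u <> v /\ exists H x, subgroup H /\ proper H /\ in_lcoset x H u /\ in_lcoset x H v.

Definition Mtriangle (u v w : G) : Prop :=
  u <> v /\ v <> w /\ u <> w /\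
  exists H x, subgroup H /\ proper H /\
    in_lcoset x H u /\ in_lcoset x H v /\ in_lcoset x H w.

(* Standard presentation of pi_1(M(G)): generators are ordered pairs (u,v);
   a letter is a generator with an exponent sign (true = +1, false = -1). *)
Definition letter : Type := ((G * G) * bool)%type.
Definition word : Type := list letter.

Inductive relator : word -> Prop :=
| rel_base u v : Medge u v -> (u = gone \/ v = gone) -> relator [((u, v), true)]
| rel_inv u v : Medge u v -> relator [((u, v), true); ((v, u), true)]
| rel_tri u v w : Mtriangle u v w ->
    relator [((u, v), true); ((v, w), true); ((w, u), true)].

Inductive wstep : word -> word -> Prop :=
| wstep_rel a r b : relator r -> wstep (a ++ r ++ b) (a ++ b)
| wstep_free a p s b : wstep (a ++ [(p, s); (p, negb s)] ++ b) (a ++ b).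

Definition wequiv : word -> word -> Prop := clos_refl_sym_trans word wstep.

Definition gen_trivial (u v : G) : Prop := wequiv [((u, v), true)] [].

Definition n_locally_simply_connected (n : nat) : Prop :=
  forall g h : G, Medge g h -> has_order g n -> gen_trivial g h.

(* |M(G)| simply connected: connected 1-skeleton and trivial pi_1
   (every generator of the standard presentation is trivial) *)
Definition M_simply_connected : Prop :=
  (forall u v : G, clos_refl_trans G Medge u v) /\
  (forall u v : G, Medge u v -> gen_trivial u v).

Definition cover (S : (G -> Prop) -> Prop) : Prop :=
  (forall H, S H -> subgroup H /\ proper H /\ nontrivial H) /\
  (forall g : G, exists H, S H /\ H g).

(* G acts 2-transitively on G/H by left multiplication; cosets xH = yH iff x^-1 y in H *)
Definition two_transitive_on (H : G -> Prop) : Prop :=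
  forall x1 y1 x2 y2 : G,
    ~ H (gmul (ginv x1) y1) -> ~ H (gmul (ginv x2) y2) ->
    exists g : G, H (gmul (ginv (gmul g x1)) x2) /\ H (gmul (ginv (gmul g y1)) y2).

Definition two_transitive (S : (G -> Prop) -> Prop) : Prop :=
  forall H, S H -> two_transitive_on H.

Definition n_regular (n : nat) (S : (G -> Prop) -> Prop) : Prop :=
  forall H, S H -> exists g : G, has_order g n /\
    exists x : G, ~ H (gmul (ginv (gmul g x)) x).

End Defs.

(* Main.v *)
Require Import Defs.
From Stdlib Require Import List ZArith Relations Classical.
Import ListNotations.

Section Aux.
Variable G : group.

Lemma mulVK (x y : G) : gmul (ginv x) (gmul x y) = y.
Proof. rewrite gmulA, gmulVl, gmul1l; reflexivity. Qed.
Lemma mulKr (x y : G) : gmul (gmul y x) (ginv x) = y.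
Proof. rewrite <- gmulA, gmulVr, gmul1r; reflexivity. Qed.
Lemma mulKl (x y : G) : gmul (gmul y (ginv x)) x = y.
Proof. rewrite <- gmulA, gmulVl, gmul1r; reflexivity. Qed.
Lemma inv_uniq (x y : G) : gmul x y = gone -> ginv x = y.
Proof. intro E. rewrite <- (mulVK x y), E, gmul1r. reflexivity. Qed.
Lemma ginv1 : ginv (gone : G) = gone.
Proof. apply inv_uniq, gmul1l. Qed.
Lemma ginv_inv (x : G) : ginv (ginv x) = x.
Proof. apply inv_uniq, gmulVl. Qed.
Lemma ginv_mul (x y : G) : ginv (gmul x y) = gmul (ginv y) (ginv x).
Proof. apply inv_uniq. rewrite !gmulA, mulKr, gmulVr. reflexivity. Qed.

Lemma gpow_conj (a g : G) m :
  gpow G (gmul (gmul a g) (ginv a)) m = gmul (gmul a (gpow G g m)) (ginv a).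
Proof.
  induction m; simpl.
  - rewrite gmul1r, gmulVr; reflexivity.
  - rewrite IHm, !gmulA, mulKl. reflexivity.
Qed.

Lemma has_order_conj (a g : G) n : has_order G g n ->
  has_order G (gmul (gmul a g) (ginv a)) n.
Proof.
  intros [h1 [h2 h3]]. split; [exact h1|split].
  - rewrite gpow_conj, h2, gmul1r, gmulVr; reflexivity.
  - intros m Hm E. apply (h3 m Hm). rewrite gpow_conj in E.
    transitivity (gmul (ginv a) (gmul (gmul (gmul a (gpow G g m)) (ginv a)) a)).
    + rewrite mulKl, mulVK. reflexivity.
    + rewrite E, gmul1l, gmulVl. reflexivity.
Qed.

Lemma sub_inv (H : G -> Prop) x : subgroup G H -> H (ginv x) -> H x.
Proof. intros [_ [_ Hi]] h. rewrite <- (ginv_inv x). auto. Qed.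

Lemma step_ctx c d (x y : word G) : wstep G x y -> wstep G (c++x++d) (c++y++d).
Proof.
  intro Hs; destruct Hs.
  - assert (E1 : c ++ (a ++ r ++ b) ++ d = (c++a) ++ r ++ (b++d))
      by (rewrite !app_assoc; reflexivity).
    assert (E2 : c ++ (a ++ b) ++ d = (c++a) ++ (b++d))
      by (rewrite !app_assoc; reflexivity).
    rewrite E1, E2. constructor; auto.
  - pose proof (wstep_free G (c++a) p s (b++d)) as W.
    rewrite <- !app_assoc in W. simpl in W. rewrite <- !app_assoc. simpl. exact W.
Qed.

Lemma equiv_ctx c d (x y : word G) : wequiv G x y -> wequiv G (c++x++d) (c++y++d).
Proof.
  intro Hs; induction Hs.
  - apply rst_step, step_ctx; auto.
  - apply rst_refl.
  - apply rst_sym; auto.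
  - eapply rst_trans; eauto.
Qed.

Lemma rel_triv r : relator G r -> wequiv G r [].
Proof.
  intro Hr. pose proof (wstep_rel G [] r [] Hr) as S.
  rewrite app_nil_r in S. simpl in S. apply rst_step; exact S.
Qed.

Lemma triv_sym a b : Medge G a b -> gen_trivial G a b -> gen_trivial G b a.
Proof.
  intros He Ht. unfold gen_trivial in *.
  eapply rst_trans.
  - pose proof (equiv_ctx [] [((b,a),true)] _ _ (rst_sym _ _ _ _ Ht)) as E.
    simpl in E. exact E.
  - apply rel_triv. apply rel_inv; auto.
Qed.

Lemma triv_tri u v c : Mtriangle G u v c -> gen_trivial G v c -> gen_trivial G c u ->
  gen_trivial G u v.
Proof.
  intros Ht T1 T2. unfold gen_trivial in *.
  eapply rst_trans.
  - pose proof (equiv_ctx [((u,v),true)] [] _ _ (rst_sym _ _ _ _ T2)) as E.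
    simpl in E. exact E.
  - eapply rst_trans.
    + pose proof (equiv_ctx [((u,v),true)] [((c,u),true)] _ _ (rst_sym _ _ _ _ T1)) as E.
      simpl in E. exact E.
    + apply rel_triv. apply rel_tri; auto.
Qed.

Lemma mk_edge (H : G -> Prop) x a b : subgroup G H -> proper G H ->
  in_lcoset G x H a -> in_lcoset G x H b -> a <> b -> Medge G a b.
Proof. intros. split; auto. exists H, x; auto. Qed.

End Aux.

Theorem mainTheorem13 (G : group) (n : nat) :
  ~ cyclic G ->
  (exists g : G, has_order G g n) ->
  n_locally_simply_connected G n ->
  (exists S : (G -> Prop) -> Prop, cover G S /\ two_transitive G S /\ n_regular G n S) ->
  M_simply_connected G.
Proof.
  intros _ _ Hloc [S [[Scov Sall] [S2 Sreg]]].
  assert (E1 : forall u : G, u <> gone -> Medge G u gone).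
  { intros u Hu. destruct (Sall u) as [H [SH Hu']].
    destruct (Scov H SH) as [Hs [Hp _]].
    apply (mk_edge G H gone); auto; unfold in_lcoset; rewrite ginv1, gmul1l; auto.
    destruct Hs; auto. }
  split.
  - intros u v. apply rt_trans with gone.
    + destruct (classic (u = gone)) as [->|Hu]; [apply rt_refl|apply rt_step; auto].
    + destruct (classic (v = gone)) as [->|Hv]; [apply rt_refl|apply rt_step].
      specialize (E1 v Hv). destruct E1 as [Hne R]. split; auto.
      destruct R as [H [x [a [b [c d]]]]]. exists H, x; auto.
  - intros u v Huv.
    destruct (Sall (gmul (ginv u) v)) as [H [SH Hw]].
    destruct (Scov H SH) as [Hs Hp]. destruct Hp as [Hp _].
    assert (Hc : exists c, in_lcoset G u H c /\ forall z, Medge G c z -> gen_trivial G c z).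
    { destruct (classic (H u)) as [Hu|Hu].
      - exists gone. split.
        + unfold in_lcoset. rewrite gmul1r. destruct Hs as [_ [_ Hi]]; auto.
        + intros z Hz. apply rel_triv. apply rel_base; auto.
      - destruct (Sreg H SH) as [g [Hg [x Hx]]].
        assert (N1 : ~ H (gmul (ginv x) (gmul g x))).
        { intro C. apply Hx. apply sub_inv; auto.
          rewrite ginv_mul, ginv_inv. exact C. }
        assert (N2 : ~ H (gmul (ginv gone) u)) by (rewrite ginv1, gmul1l; auto).
        destruct (S2 H SH x (gmul g x) gone u N1 N2) as [a [Ha1 Ha2]].
        exists (gmul (gmul a g) (ginv a)). split.
        + unfold in_lcoset.
          assert (E : gmul (ginv u) (gmul (gmul a g) (ginv a)) =
                      gmul (ginv (gmul (ginv (gmul a (gmul g x))) u))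
                           (gmul (ginv (gmul a x)) gone)).
          { rewrite gmul1r, (ginv_mul _ (ginv _)), ginv_inv, (ginv_mul _ a x).
            rewrite !gmulA, mulKr. reflexivity. }
          rewrite E. destruct Hs as [_ [Hm Hi]]. apply Hm; auto.
        + intros z Hz. apply Hloc; auto. apply has_order_conj; auto. }
    destruct Hc as [c [Hcc Hct]].
    assert (Hu : in_lcoset G u H u) by (unfold in_lcoset; rewrite gmulVl; destruct Hs; auto).
    assert (Hv : in_lcoset G u H v) by exact Hw.
    destruct Huv as [Hne _].
    destruct (classic (c = u)) as [->|Ncu]; [apply Hct; eapply mk_edge; eauto|].
    destruct (classic (c = v)) as [->|Ncv].
    + apply triv_sym. { eapply mk_edge; eauto. }
      apply Hct. eapply mk_edge; eauto.
    + apply (triv_tri G u v c).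
      * repeat split; auto. exists H, u; auto.
      * apply triv_sym. { eapply mk_edge; eauto. }
        apply Hct. eapply mk_edge; eauto.
      * apply Hct. eapply mk_edge; eauto.
Qed.
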